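(* Let $P$ be a finite lattice with bottom element $\perp$. Restriction $R\mapsto R|_{P\setminus\{\perp\}}$ is a bijection from the set of transfer systems $R$ on $P$ satisfying $\perp\,R\,a$ for all $a\in P$ onto the set of transfer systems on the poset $P\setminus\{\perp\}$; its inverse sends a transfer system $Q$ on $P\setminus\{\perp\}$ to $Q$ together with all relations $\perp\,\tilde Q\,a$, $a\in P$.
   Context: A transfer system on a finite lattice $(P,\le)$ is a partial order $R$ refining $\le$ closed under restriction: $x\,R\,z$ and $y\le z$ imply $(x\wedge y)\,R\,y$. For a finite poset $(S,\le)$ (not necessarily a lattice), a transfer system on $S$ is a partial order $R$ on $S$ refining $\le$ such that whenever $x\,R\,y$ and $z\le y$, then $w\,R\,z$ for every $w$ that is maximal among common lower bounds of $x$ and $z$ (vacuous if there is none); when $x\wedge z$ exists this agrees with the lattice definition. *)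

(* Defs.v *)
From HB Require Import structures.
From mathcomp Require Import all_boot all_order.
Set Implicit Arguments. Unset Strict Implicit. Unset Printing Implicit Defensive.
Import Order.Theory.
Local Open Scope order_scope.

Definition is_partial_order (S : Type) (R : rel S) : Prop :=
  [/\ forall x, R x x,
      forall x y, R x y -> R y x -> x = y &
      forall x y z, R x y -> R y z -> R x z].

Definition transfer_system_lattice (d : Order.disp_t) (L : latticeType d)
    (R : rel L) : Prop :=
  [/\ is_partial_order R,
      forall x y, R x y -> x <= y &
      forall x y z, R x z -> y <= z -> R (x `&` y) y].

Definition max_common_lower (S : Type) (le : rel S) (x z w : S) : Prop :=
  [/\ le w x, le w z &
      forall w', le w' x -> le w' z -> le w w' -> w' = w].

Definition transfer_system_poset (S : Type) (le : rel S) (R : rel S) : Prop :=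
  [/\ is_partial_order R,
      forall x y, R x y -> le x y &
      forall x y z, R x y -> le z y ->
        forall w, max_common_lower le x z w -> R w z].

Definition nonbot (d : Order.disp_t) (P : finTBLatticeType d) : Type :=
  {x : P | x != \bot}.

Definition nonbot_le (d : Order.disp_t) (P : finTBLatticeType d) :
  rel (nonbot P) := fun a b => (val a <= val b).

Definition restr_nonbot (d : Order.disp_t) (P : finTBLatticeType d)
  (R : rel P) : rel (nonbot P) := fun a b => R (val a) (val b).

Definition ext_bot (d : Order.disp_t) (P : finTBLatticeType d)
  (Q : rel (nonbot P)) : rel P :=
  fun x y => (x == \bot) ||
    match @insub _ (fun u : P => u != \bot) (nonbot P) x,
          @insub _ (fun u : P => u != \bot) (nonbot P) y with
    | Some a, Some b => Q a b
    | _, _ => false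
    end.

(* Main.v *)
Require Import Defs.
From mathcomp Require Import all_boot all_order.
Import Order.Theory.
Local Open Scope order_scope.

Section Aux.
Variables (d : Order.disp_t) (P : finTBLatticeType d).

Lemma ext_botV (Q : rel (nonbot P)) (a b : nonbot P) :
  ext_bot Q (val a) (val b) = Q a b.
Proof.
rewrite /ext_bot (negbTE (valP a)) /=.
by rewrite !valK.
Qed.

Lemma ext_bot0 (Q : rel (nonbot P)) y : ext_bot Q \bot y.
Proof. by rewrite /ext_bot eqxx. Qed.

Lemma ext_botx0 (Q : rel (nonbot P)) x : ext_bot Q x \bot = (x == \bot).
Proof.
rewrite /ext_bot; case: (x == \bot) => //=.
rewrite (@insubF _ _ (nonbot P) \bot) ?eqxx //.
by case: insub.
Qed.

Lemma nonbot_cases (x : P) : x = \bot \/ exists a : nonbot P, x = val a.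
Proof.
case: (boolP (x == \bot)) => [/eqP ->|nx]; first by left.
by right; exists (exist (fun u : P => u != \bot) x nx).
Qed.

End Aux.
Arguments nonbot_cases {d P}.
Arguments ext_botV {d P}.
Arguments ext_bot0 {d P}.
Arguments ext_botx0 {d P}.

Theorem lemma4p8 (d : Order.disp_t) (P : finTBLatticeType d) :
  (forall R : rel P, transfer_system_lattice R -> (forall a, R \bot a) ->
     transfer_system_poset (@nonbot_le d P) (restr_nonbot R)) /\
  (forall Q : rel (nonbot P), transfer_system_poset (@nonbot_le d P) Q ->
     transfer_system_lattice (ext_bot Q) /\ (forall a, ext_bot Q \bot a)) /\
  (forall R : rel P, transfer_system_lattice R -> (forall a, R \bot a) ->
     ext_bot (restr_nonbot R) =2 R) /\
  (forall Q : rel (nonbot P), transfer_system_poset (@nonbot_le d P) Q ->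
     restr_nonbot (ext_bot Q) =2 Q).
Proof.
split; [|split; [|split]].
- move=> R [[Rr Ra Rt] Rle Rres] Rbot; split.
  + split; rewrite /restr_nonbot.
    * by move=> x; apply: Rr.
    * by move=> x y H1 H2; apply: val_inj; apply: Ra.
    * by move=> x y z; apply: Rt.
  + by move=> x y; apply: Rle.
  + move=> x y z Hxy Hzy w [Hwx Hwz Hmax].
    rewrite /restr_nonbot.
    have H := Rres _ _ _ Hxy Hzy.
    have Hwm : val w <= val x `&` val z by rewrite lexI; apply/andP; split.
    have nm : val x `&` val z != \bot.
      apply/negP => /eqP E; move: Hwm; rewrite E lex0 => /eqP E'.
      by move: (valP w); rewrite E' eqxx.
    pose m : nonbot P := exist (fun u : P => u != \bot) _ nm.
    have -> : w = m.
      symmetry; apply: Hmax; rewrite /nonbot_le /= ?leIl ?leIr //.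
    by [].
- move=> Q [[Qr Qa Qt] Qle Qres]; split; last by move=> a; apply: ext_bot0.
  split.
  + split.
    * move=> x; case: (nonbot_cases x) => [->|[a ->]]; first exact: ext_bot0.
      by rewrite ext_botV.
    * move=> x y; case: (nonbot_cases x) => [->|[a ->]];
        case: (nonbot_cases y) => [->|[b ->]] //.
      - by rewrite ext_botx0 (negbTE (valP b)).
      - by rewrite ext_botx0 (negbTE (valP a)).
      - by rewrite !ext_botV => H1 H2; rewrite (Qa _ _ H1 H2).
    * move=> x y z; case: (nonbot_cases x) => [->|[a ->]];
        first by move=> *; apply: ext_bot0.
      case: (nonbot_cases y) => [->|[b ->]];
        first by rewrite ext_botx0 (negbTE (valP a)).
      case: (nonbot_cases z) => [->|[c ->]];
        first by rewrite ext_botx0 (negbTE (valP b)).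
      rewrite !ext_botV; exact: Qt.
  + move=> x y; case: (nonbot_cases x) => [->|[a ->]]; first by rewrite le0x.
    case: (nonbot_cases y) => [->|[b ->]];
      first by rewrite ext_botx0 (negbTE (valP a)).
    by rewrite ext_botV; apply: Qle.
  + move=> x y z.
    case: (boolP (x `&` y == \bot)) => [/eqP -> _ _|nm]; first exact: ext_bot0.
    have nx : x != \bot by apply: contraNneq nm => ->; rewrite meet0x.
    have ny : y != \bot by apply: contraNneq nm => ->; rewrite meetx0.
    pose a : nonbot P := exist (fun u : P => u != \bot) x nx.
    pose b : nonbot P := exist (fun u : P => u != \bot) y ny.
    pose m : nonbot P := exist (fun u : P => u != \bot) _ nm.
    case: (nonbot_cases z) => [->|[c ->]].
      by rewrite -[x]/(val a) ext_botx0 (negbTE nx).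
    move=> Hxz Hyz.
    rewrite -[x `&` y]/(val m) -[y]/(val b).
    rewrite -[x]/(val a) ext_botV in Hxz.
    rewrite ext_botV; apply: (Qres a c b Hxz Hyz).
    split; rewrite /nonbot_le /= ?leIl ?leIr //.
    move=> w' H1 H2 H3; apply: val_inj => /=; apply: le_anti.
    by rewrite H3 lexI H1 H2.
- move=> R [[Rr Ra Rt] Rle Rres] Rbot x y.
  case: (nonbot_cases x) => [->|[a ->]]; first by rewrite ext_bot0 Rbot.
  case: (nonbot_cases y) => [->|[b ->]].
    rewrite ext_botx0 (negbTE (valP a)); apply/esym/negP => H.
    by move: (Rle _ _ H); rewrite lex0 (negbTE (valP a)).
  by rewrite ext_botV.
- move=> Q _ a b; by rewrite /restr_nonbot ext_botV.
Qed.
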